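(* Let $X$ and $Y$ be shift spaces with $Y$ irreducible. If $\phi : X \to Y$ is an open code, then $\phi$ is onto.
   Context: Shift spaces are closed shift-invariant subsets of $\mathcal{A}^{\mathbb{Z}}$ ($\mathcal{A}$ finite, with the shift $\sigma(x)_i=x_{i+1}$); a code is a continuous shift-commuting map. $Y$ is irreducible if for all words $u,v$ occurring in $Y$ there is $w$ with $uwv$ occurring in $Y$. Open: images of open sets are open. *)

(* Defs.v *)
From mathcomp Require Import all_boot all_order all_algebra.
Set Implicit Arguments. Unset Strict Implicit. Unset Printing Implicit Defensive.

Definition config (A : Type) := int -> A.

Definition shift (A : Type) (x : config A) : config A := fun i => x (i + 1)%R.

(* x and y agree on the central window [-n, n]; the sets {y | agree_on n x y}
   form a neighbourhood basis of x in the product topology of A^Z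
   (A finite, discrete). *)
Definition agree_on (A : Type) (n : nat) (x y : config A) : Prop :=
  forall i : int, (absz i <= n)%N -> x i = y i.

Definition closed_set (A : Type) (X : config A -> Prop) : Prop :=
  forall x, (forall n, exists y, X y /\ agree_on n x y) -> X x.

Definition shift_invariant (A : Type) (X : config A -> Prop) : Prop :=
  (forall x, X x -> X (shift x)) /\
  (forall y, X y -> exists x, X x /\ shift x = y).

Definition shift_space (A : finType) (X : config A -> Prop) : Prop :=
  closed_set X /\ shift_invariant X.

Definition occurs (A : Type) (X : config A -> Prop) (u : seq A) : Prop :=
  exists y, X y /\ exists i : int,
    forall k : nat, (k < size u)%N -> forall d : A, y (i + k%:Z)%R = nth d u k.

Definition irreducible (A : Type) (Y : config A -> Prop) : Prop :=
  forall u v : seq A, occurs Y u -> occurs Y v ->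
    exists w : seq A, occurs Y (u ++ w ++ v).

Definition continuous_on (A B : Type) (X : config A -> Prop)
    (phi : config A -> config B) : Prop :=
  forall x, X x -> forall n : nat, exists m : nat,
    forall y, X y -> agree_on m x y -> agree_on n (phi x) (phi y).

Definition code (A B : Type) (X : config A -> Prop) (Y : config B -> Prop)
    (phi : config A -> config B) : Prop :=
  (forall x, X x -> Y (phi x)) /\ continuous_on X phi /\
  (forall x, X x -> phi (shift x) = shift (phi x)).

Definition rel_open (A : Type) (X : config A -> Prop) (U : config A -> Prop) : Prop :=
  (forall x, U x -> X x) /\
  (forall x, U x -> exists n : nat, forall y, X y -> agree_on n x y -> U y).

Definition image (A B : Type) (phi : config A -> config B) (U : config A -> Prop)
  : config B -> Prop := fun y => exists x, U x /\ phi x = y.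

Definition open_map (A B : Type) (X : config A -> Prop) (Y : config B -> Prop)
    (phi : config A -> config B) : Prop :=
  forall U, rel_open X U -> rel_open Y (image phi U).

Definition onto (A B : Type) (X : config A -> Prop) (Y : config B -> Prop)
    (phi : config A -> config B) : Prop :=
  forall y, Y y -> exists x, X x /\ phi x = y.

(* Main.v *)
Require Import Defs.
From mathcomp Require Import all_boot all_order all_algebra.
From mathcomp Require Import zify.
From Stdlib Require Import FunctionalExtensionality ClassicalEpsilon Classical.

Set Implicit Arguments. Unset Strict Implicit.
Import GRing.Theory Num.Theory.
Local Open Scope ring_scope.

Definition tr (A : Type) (x : config A) (k : int) : config A := fun i => x (i + k).

Lemma tr0 A (x : config A) : tr x 0 = x.
Proof. apply: functional_extensionality => i; by rewrite /tr addr0. Qed.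

Lemma tr_tr A (x : config A) k l : tr (tr x k) l = tr x (k + l).
Proof. apply: functional_extensionality => i; rewrite /tr; congr x; lia. Qed.

Lemma tr_closed A (X : config A -> Prop) : shift_invariant X ->
  forall x k, X x -> X (tr x k).
Proof.
case=> Hf Hb.
have pos : forall (n : nat) x, X x -> X (tr x n%:Z).
  elim=> [|n IH] x Xx; first by rewrite tr0.
  have -> : tr x n.+1%:Z = tr (tr x n%:Z) 1 by rewrite tr_tr; congr tr; lia.
  exact: Hf (IH _ Xx).
have neg : forall (n : nat) x, X x -> X (tr x (- n%:Z)).
  elim=> [|n IH] x Xx; first by rewrite oppr0 tr0.
  have [x' [Xx' Hs]] := Hb _ (IH _ Xx).
  have -> : tr x (- n.+1%:Z) = tr (tr x (- n%:Z)) (-1) by rewrite tr_tr; congr tr; lia.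
  rewrite -Hs.
  have -> : shift x' = tr x' 1 by [].
  rewrite tr_tr.
  have -> : (1 + -1 : int) = 0 by lia.
  by rewrite tr0.
move=> x k Xx; case: k => n; first exact: pos.
rewrite NegzE; exact: neg.
Qed.

Lemma phi_tr A B (X : config A -> Prop) (phi : config A -> config B) :
  shift_invariant X -> (forall x, X x -> phi (shift x) = shift (phi x)) ->
  forall x k, X x -> exists x', X x' /\ phi x' = tr (phi x) k.
Proof.
move=> HX Hc.
have pos : forall (n : nat) x, X x -> phi (tr x n%:Z) = tr (phi x) n%:Z.
  elim=> [|n IH] x Xx; first by rewrite !tr0.
  have E : forall (z : config A), tr z n.+1%:Z = shift (tr z n%:Z).
    by move=> z; rewrite /shift -/(tr (tr z n%:Z) 1) tr_tr; congr tr; lia.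
  have EB : tr (phi x) n.+1%:Z = shift (tr (phi x) n%:Z).
    by rewrite /shift -/(tr (tr (phi x) n%:Z) 1) tr_tr; congr tr; lia.
  by rewrite E EB Hc ?IH //; apply: tr_closed.
move=> x k Xx; case: k => n.
  by exists (tr x n%:Z); split; [apply: tr_closed | apply: pos].
exists (tr x (Negz n)); split; first by apply: tr_closed.
have Xx' : X (tr x (Negz n)) by apply: tr_closed.
have ex : x = tr (tr x (Negz n)) n.+1%:Z.
  by rewrite tr_tr NegzE addNr tr0.
by rewrite [in RHS]ex pos // tr_tr NegzE addrN tr0.
Qed.

Definition inf (P : nat -> Prop) := forall K, exists m, (K <= m)%N /\ P m.

Lemma pigeon (T : finType) (P : nat -> Prop) (f : nat -> T) :
  inf P -> exists t, inf (fun m => P m /\ f m = t).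
Proof.
move=> HP; apply: NNPP => H.
have H' : forall t, exists K, forall m, (K <= m)%N -> ~ (P m /\ f m = t).
  move=> t; apply: NNPP => H2; apply: H; exists t => K; apply: NNPP => H3.
  apply: H2; exists K => m Km Pm; apply: H3; by exists m.
pose g t := proj1_sig (constructive_indefinite_description _ (H' t)).
have [m [Km Pm]] := HP (\max_(t : T) g t).
have := proj2_sig (constructive_indefinite_description _ (H' (f m))) m.
apply => //; apply: leq_trans Km; exact: (leq_bigmax (f m)).
Qed.

Lemma cluster (A : finType) (s : nat -> config A) :
  exists x, forall N K, exists m, (K <= m)%N /\ agree_on N x (s m).
Proof.
have step : forall (P : nat -> Prop) (k : nat), inf P ->
    {c : A * A | inf (fun m => P m /\ (s m (- k%:Z), s m k%:Z) = c)}.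
  move=> P k HP; apply: constructive_indefinite_description; exact: pigeon.
pose F := fix F (k : nat) : {P : nat -> Prop | inf P} :=
  match k with
  | 0%N => exist _ (fun _ => True) (fun K => ex_intro _ K (conj (leqnn K) I))
  | k'.+1 => exist _ (fun m => sval (F k') m /\ (s m (- k'%:Z), s m k'%:Z)
                                  = sval (step _ k' (svalP (F k'))))
                     (svalP (step _ k' (svalP (F k'))))
  end.
pose c k := sval (step _ k (svalP (F k))).
have inv : forall k m, sval (F k) m -> forall j, (j < k)%N ->
    (s m (- j%:Z), s m j%:Z) = c j.
  elim=> [|k IH] m //= [H1 H2] j; rewrite ltnS leq_eqVlt => /orP [/eqP -> //|].
  exact: IH.
exists (fun i => if (0 <= i) then (c (absz i)).2 else (c (absz i)).1).
move=> N K.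
have [m [Km Hm]] := svalP (F N.+1) K.
exists m; split => // i hi.
have := inv _ _ Hm (absz i) (hi : (absz i < N.+1)%N).
case: (c (absz i)) => a b [<- <-] /=.
case: ifP => h; congr s; lia.
Qed.

Lemma occ_window (B : Type) (Y : config B -> Prop) (y : config B) (n : nat) :
  Y y -> occurs Y [seq y (k%:Z - n%:Z) | k <- iota 0 n.*2.+1].
Proof.
move=> Yy; exists y; split => //; exists (- n%:Z) => k.
rewrite size_map size_iota => hk d.
rewrite (nth_map 0%N) ?size_iota // nth_iota // add0n; congr y; lia.
Qed.

Theorem lemma2p1 (A B : finType) (X : config A -> Prop) (Y : config B -> Prop)
    (phi : config A -> config B) :
  shift_space X -> shift_space Y -> (exists x, X x) ->
  irreducible Y ->
  code X Y phi -> open_map X Y phi ->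
  onto X Y phi.
Proof.
move=> [Xcl Xsi] [Ycl Ysi] [x0 Xx0] Yirr [Hmap [Hcont Hcomm]] Hopen y Yy.
have [_ Himg] := Hopen X (conj (fun x h => h) (fun x h => ex_intro _ 0%N (fun y Xy _ => Xy))).
have [n0 Hn0] := Himg (phi x0) (ex_intro _ x0 (conj Xx0 erefl)).
have approx : forall m : nat, exists x, X x /\ agree_on m y (phi x).
  move=> m.
  set z := phi x0.
  set u := [seq z (k%:Z - n0%:Z) | k <- iota 0 n0.*2.+1].
  set v := [seq y (k%:Z - m%:Z) | k <- iota 0 m.*2.+1].
  have [w [y' [Yy' [i Hi]]]] := Yirr u v (occ_window n0 (Hmap _ Xx0)) (occ_window m Yy).
  have su : size u = n0.*2.+1 by rewrite size_map size_iota.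
  have sv : size v = m.*2.+1 by rewrite size_map size_iota.
  pose y2 := tr y' (i + n0%:Z).
  have Yy2 : Y y2 by exact: tr_closed.
  have ag : agree_on n0 z y2.
    move=> j hj; rewrite /y2 /tr.
    have hk : (absz (j + n0%:Z)%R < size u)%N by rewrite su; lia.
    have := Hi (absz (j + n0%:Z)) _ (z 0).
    rewrite !size_cat nth_cat hk (nth_map 0%N) ?size_iota -?su // nth_iota -?su // add0n.
    have -> : j + (i + n0%:Z) = i + (absz (j + n0%:Z))%:Z by lia.
    move=> -> //; first by congr z; lia.
    lia.
  have [x1 [Xx1 ex1]] := Hn0 _ Yy2 ag.
  pose q := (size u + size w)%:Z + m%:Z - n0%:Z.
  have [x2 [Xx2 ex2]] := phi_tr Xsi Hcomm q Xx1.
  exists x2; split => //; rewrite ex2 ex1 => j hj.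
  rewrite /y2 /tr.
  pose k := absz (j + m%:Z).
  have hk : (k < size v)%N by rewrite sv /k; lia.
  have := Hi (size u + size w + k)%N _ (z 0).
  rewrite !size_cat nth_cat.
  have -> : (size u + size w + k < size u)%N = false by lia.
  rewrite nth_cat.
  have -> : (size u + size w + k - size u < size w)%N = false by lia.
  have -> : (size u + size w + k - size u - size w = k)%N by lia.
  rewrite (nth_map 0%N) ?size_iota -?sv // nth_iota -?sv // add0n.
  have -> : j + q + (i + n0%:Z) = i + (size u + size w + k)%N%:Z by rewrite /q /k; lia.
  move=> -> //; first by congr y; rewrite /k; lia.
  rewrite /k; lia.
have [s Hs] : exists s : nat -> config A, forall m, X (s m) /\ agree_on m y (phi (s m)).
  exists (fun m => proj1_sig (constructive_indefinite_description _ (approx m))).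
  move=> m; exact: (proj2_sig (constructive_indefinite_description _ (approx m))).
have [x Hx] := cluster s.
have Xx : X x.
  apply: Xcl => n; have [m [_ hm]] := Hx n 0%N.
  by exists (s m); split; [exact: (Hs m).1 | exact: hm].
exists x; split => //.
apply: functional_extensionality => j.
have [M HM] := Hcont x Xx (absz j).
have [m [hm agm]] := Hx (maxn M (absz j)) (maxn M (absz j)).
have E1 := HM (s m) (Hs m).1 (fun i hi => agm i (leq_trans hi (leq_maxl _ _))) j (leqnn _).
have E2 := (Hs m).2 j (leq_trans (leq_maxr M _) hm).
by rewrite E1 E2.
Qed.
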